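(* Let $F:\mathbb{R}^n\to\mathbb{H}^{n+1}\subset\mathbb{L}^{n+2}$ be the immersion of a horosphere in the hyperbolic space, with unit normal vector field $N$ and all principal curvatures equal to $\kappa=\pm1$. Then the solution to the mean curvature flow with initial data $F$ is $$\widehat F^t(x)=\cosh(nt)F(x)+\kappa\sinh(nt)N(x),$$ for all $t\in\mathbb{R}$. Moreover, $\widehat F^t(\mathbb{R}^n)$ is a horosphere for all $t\in\mathbb{R}$.
   Context: $\mathbb{H}^{n+1}$ is the hyperboloid model of hyperbolic space in the Lorentzian space $\mathbb{L}^{n+2}$. Second fundamental form $h(v,w)=-\langle dN(v),dF(w)\rangle$, principal curvatures are its eigenvalues, mean curvature $H=\sum_i\kappa_i$. A family $\widehat F:M\times I\to\mathbb{H}^{n+1}$, $0\in I$, solves the mean curvature flow with initial condition $F$ if $\partial_t\widehat F=\widehat H\widehat N$ and $\widehat F(\cdot,0)=F$, where $\widehat N^t$ is a unit normal of $\widehat F^t$ and $\widehat H^t$ the corresponding mean curvature. *)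

(* Defs.v *)
From HB Require Import structures.
From mathcomp Require Import all_boot all_order all_algebra.
From mathcomp Require Import all_classical all_reals all_analysis.
Set Implicit Arguments. Unset Strict Implicit. Unset Printing Implicit Defensive.
Import Order.TTheory GRing.Theory Num.Theory.
Import numFieldNormedType.Exports.
Local Open Scope classical_set_scope.
Local Open Scope ring_scope.

Section Defs.
Variable R : realType.

Definition cosh (x : R) : R := (expR x + expR (- x)) / 2.
Definition sinh (x : R) : R := (expR x - expR (- x)) / 2.

(* Lorentzian inner product on L^{m+1} = R^{m+1}, coordinate 0 timelike *)
Definition lor (m : nat) (u v : 'rV[R]_m.+1) : R :=
  - (u ord0 ord0 * v ord0 ord0)
  + \sum_(i < m.+1 | i != ord0) u ord0 i * v ord0 i.

Definition hyperbolic (n : nat) : set 'rV[R]_(n.+2) :=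
  [set x | lor x x = -1 /\ 0 < x ord0 ord0].

Definition horosphere (n : nat) (S : set 'rV[R]_(n.+2)) : Prop :=
  exists v : 'rV[R]_(n.+2),
    lor v v = 0 /\ 0 < v ord0 ord0 /\
    S = [set x | @hyperbolic n x /\ lor x v = -1].

Definition partial (n : nat) (F : 'rV[R]_n -> 'rV[R]_(n.+2)) (x : 'rV[R]_n)
  (i : 'I_n) : 'rV[R]_(n.+2) := 'D_(delta_mx ord0 i) F x.

Definition jac (n : nat) (F : 'rV[R]_n -> 'rV[R]_(n.+2)) (x : 'rV[R]_n)
  : 'M[R]_(n, n.+2) := \matrix_(i < n) partial F x i.

Definition immersion_H (n : nat) (F : 'rV[R]_n -> 'rV[R]_(n.+2)) : Prop :=
  (forall x, differentiable F x) /\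
  (forall x, @hyperbolic n (F x)) /\
  (forall x, row_free (jac F x)).

Definition unit_normal (n : nat) (F N : 'rV[R]_n -> 'rV[R]_(n.+2)) : Prop :=
  (forall x, differentiable N x) /\
  (forall x, lor (N x) (F x) = 0) /\
  (forall x, lor (N x) (N x) = 1) /\
  (forall x i, lor (N x) (partial F x i) = 0).

Definition metric (n : nat) (F : 'rV[R]_n -> 'rV[R]_(n.+2)) (x : 'rV[R]_n)
  : 'M[R]_n := \matrix_(i, j) lor (partial F x i) (partial F x j).

Definition second_ff (n : nat) (F N : 'rV[R]_n -> 'rV[R]_(n.+2))
  (x : 'rV[R]_n) : 'M[R]_n :=
  \matrix_(i, j) - lor (partial N x i) (partial F x j).

Definition principal_curvature (n : nat) (F N : 'rV[R]_n -> 'rV[R]_(n.+2))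
  (x : 'rV[R]_n) (k : R) : Prop :=
  exists2 w : 'rV[R]_n, w != 0 & w *m second_ff F N x = k *: (w *m metric F x).

(* mean curvature: sum of principal curvatures (with multiplicity)
   = trace of the shape operator g^{-1} h *)
Definition mean_curvature (n : nat) (F N : 'rV[R]_n -> 'rV[R]_(n.+2))
  (x : 'rV[R]_n) : R := \tr (invmx (metric F x) *m second_ff F N x).

End Defs.

(* Main.v *)
Require Import Defs.
From HB Require Import structures.
From mathcomp Require Import all_boot all_order all_algebra.
From mathcomp Require Import all_classical all_reals all_analysis.
From mathcomp Require Import ring lra.
Import Order.TTheory GRing.Theory Num.Theory.
Import numFieldNormedType.Exports.
Local Open Scope classical_set_scope.
Local Open Scope ring_scope.
Set Implicit Arguments. Unset Strict Implicit. Unset Printing Implicit Defensive.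

Section Lor.
Variable R : realType.
Variable m : nat.
Implicit Types u w z : 'rV[R]_m.+1.

Definition sgn (i : 'I_m.+1) : R := if i == ord0 then -1 else 1.

Lemma lorE u w : lor u w = \sum_i sgn i * (u ord0 i * w ord0 i).
Proof.
rewrite /lor [RHS](bigD1 ord0) //= /sgn eqxx mulN1r; congr (_ + _).
by apply: eq_bigr => i /negbTE ->; rewrite mul1r.
Qed.

Lemma lorC u w : lor u w = lor w u.
Proof. by rewrite !lorE; apply: eq_bigr => i _; rewrite [u _ _ * _]mulrC. Qed.

Lemma lorDl u w z : lor (u + w) z = lor u z + lor w z.
Proof. rewrite !lorE -big_split; apply: eq_bigr => i _; rewrite !mxE /=; ring. Qed.

Lemma lorZl a u z : lor (a *: u) z = a * lor u z.
Proof. by rewrite !lorE mulr_sumr; apply: eq_bigr => i _; rewrite !mxE; ring. Qed.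

Lemma lorNl u z : lor (- u) z = - lor u z.
Proof. by rewrite -scaleN1r lorZl mulN1r. Qed.

Lemma lorBl u w z : lor (u - w) z = lor u z - lor w z.
Proof. by rewrite lorDl lorNl. Qed.

Lemma lor0l z : lor 0 z = 0.
Proof. by rewrite -(scale0r 0) lorZl mul0r. Qed.

Lemma lorDr u w z : lor z (u + w) = lor z u + lor z w.
Proof. by rewrite !(lorC z) lorDl. Qed.
Lemma lorZr a u z : lor z (a *: u) = a * lor z u.
Proof. by rewrite !(lorC z) lorZl. Qed.
Lemma lorNr u z : lor z (- u) = - lor z u.
Proof. by rewrite !(lorC z) lorNl. Qed.
Lemma lorBr u w z : lor z (u - w) = lor z u - lor z w.
Proof. by rewrite !(lorC z) lorBl. Qed.
Lemma lor0r z : lor z 0 = 0.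
Proof. by rewrite lorC lor0l. Qed.

Lemma lor_self u : lor u u = - (u ord0 ord0) ^+ 2 + \sum_(i | i != ord0) (u ord0 i) ^+ 2.
Proof. by rewrite /lor expr2; congr (_ + _); apply: eq_bigr => i _; rewrite expr2. Qed.

Lemma sum_sq_ge0 u : 0 <= \sum_(i | i != ord0) (u ord0 i) ^+ 2.
Proof. by apply: sumr_ge0 => i _; exact: sqr_ge0. Qed.

Lemma lor_space_ge0 u : u ord0 ord0 = 0 -> 0 <= lor u u.
Proof. by move=> h; rewrite lor_self h expr0n /= oppr0 add0r sum_sq_ge0. Qed.

Lemma lor_space_eq0 u : u ord0 ord0 = 0 -> lor u u = 0 -> u = 0.
Proof.
move=> h; rewrite lor_self h expr0n /= oppr0 add0r => /eqP.
rewrite psumr_eq0; last by move=> i _; exact: sqr_ge0.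
move=> /allP H; apply/rowP => i; rewrite mxE.
have [->|ni] := eqVneq i ord0; first by rewrite h.
have := H i (mem_index_enum i); rewrite ni /= sqrf_eq0 => /eqP //.
Qed.

Lemma timelike_ne0 u : lor u u = -1 -> u ord0 ord0 != 0.
Proof.
move=> h; apply/negP => /eqP h0.
by have := lor_space_ge0 h0; rewrite h ler0N1.
Qed.

Lemma lor_orth_ge0 u P : lor P P = -1 -> lor u P = 0 ->
  0 <= lor u u /\ (lor u u = 0 -> u = 0).
Proof.
move=> hP huP.
have p0 := timelike_ne0 hP.
set l := u ord0 ord0 / P ord0 ord0.
set w := u - l *: P.
have w0 : w ord0 ord0 = 0 by rewrite !mxE /l divfK // subrr.
have ew : lor w w = lor u u - l ^+ 2.
  rewrite /w !(lorBl, lorBr, lorZl, lorZr) hP huP (lorC P u) huP; ring.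
have := lor_space_ge0 w0; rewrite ew subr_ge0 => hle.
split; first exact: le_trans (sqr_ge0 _) hle.
move=> hu0.
have hl : l = 0.
  by apply/eqP; rewrite -sqrf_eq0 eq_le sqr_ge0 andbT -hu0.
have := lor_space_eq0 w0; rewrite ew hu0 hl expr0n /= subr0 => /(_ erefl).
by rewrite /w hl scale0r subr0.
Qed.

Lemma future_pos z v : lor z z = -1 -> lor z v = -1 -> lor v v = 0 ->
  0 < v ord0 ord0 -> 0 < z ord0 ord0.
Proof.
move=> hz hzv hv v0.
rewrite ltNge; apply/negP => hle.
have z0 := timelike_ne0 hz.
have zlt : z ord0 ord0 < 0 by rewrite lt_neqAle z0.
set mu := - z ord0 ord0 / v ord0 ord0.
set w := z + mu *: v.
have w0 : w ord0 ord0 = 0.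
  by rewrite !mxE /mu divfK ?addrN // gt_eqF.
have := lor_space_ge0 w0.
rewrite /w !(lorDl, lorDr, lorZl, lorZr) hz hzv (lorC v z) hzv hv.
have mu0 : 0 < mu by rewrite /mu divr_gt0 // oppr_gt0.
apply/negP; rewrite -ltNge. 
have -> : -1 + mu * -1 + (mu * -1 + mu * (mu * 0)) = -1 - 2 * mu by ring.
lra.
Qed.
End Lor.

Section LorDer.
Variable R : realType.
Variable m : nat.
Variable V : normedModType R.

Lemma lor_der (P Q : V -> 'rV[R]_m.+1) x v :
  derivable P x v -> derivable Q x v ->
  derivable (fun y => lor (P y) (Q y)) x v /\
  'D_v (fun y => lor (P y) (Q y)) x = lor ('D_v P x) (Q x) + lor (P x) ('D_v Q x).
Proof.
move=> hP hQ.
have cP i : derivable (fun y => P y ord0 i) x v := (derivable_mxP P x v).1 hP ord0 i.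
have cQ i : derivable (fun y => Q y ord0 i) x v := (derivable_mxP Q x v).1 hQ ord0 i.
have dP i : ('D_v P x) ord0 i = 'D_v (fun y => P y ord0 i) x by rewrite derive_mx // mxE.
have dQ i : ('D_v Q x) ord0 i = 'D_v (fun y => Q y ord0 i) x by rewrite derive_mx // mxE.

pose h (i : 'I_m.+1) : V -> R := (@sgn R m i) *: ((fun y => P y ord0 i) * (fun y => Q y ord0 i)).
have E : (fun y => lor (P y) (Q y)) = \sum_(i < m.+1) h i.
  rewrite fct_sumE; apply: funext => y; rewrite lorE.
  by apply: eq_bigr => i _.

have dh i : derivable (h i) x v by apply: derivableZ; apply: derivableM.
rewrite E; split; first exact: derivable_sum.
rewrite derive_sum // !lorE -big_split /=; apply: eq_bigr => i _.
have sc (a b : R) : a *: b = a * b by [].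
rewrite /h deriveZ; last exact: derivableM.
rewrite deriveM // dP dQ /= !sc; ring.
Qed.
End LorDer.

Section Lin.
Variable R : realType.
Variable m : nat.

Lemma lor_mull p (c : 'rV[R]_p) (J : 'M[R]_(p, m.+1)) z :
  lor (c *m J) z = \sum_k c ord0 k * lor (row k J) z.
Proof.
rewrite lorE; under eq_bigr do rewrite !mxE big_distrl /= big_distrr /=.
rewrite exchange_big /=; apply: eq_bigr => k _.
rewrite lorE big_distrr /=; apply: eq_bigr => i _; rewrite !mxE; ring.
Qed.

Definition lflip (r : 'rV[R]_m.+1) : 'rV[R]_m.+1 := \row_i (sgn R i * r ord0 i).

Lemma lflip_mx (a r : 'rV[R]_m.+1) : (a *m (lflip r)^T) ord0 ord0 = lor a r.
Proof.
rewrite lorE !mxE; apply: eq_bigr => i _; rewrite !mxE; ring.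
Qed.

Lemma lflip_eq0 r : lflip r = 0 -> r = 0.
Proof.
move=> /rowP h; apply/rowP => i; have := h i; rewrite !mxE /sgn.
by case: (i == ord0) => /eqP; rewrite ?mulN1r ?oppr_eq0 ?mul1r => /eqP.
Qed.
End Lin.

Section Geo.
Variable R : realType.
Variable n : nat.
Implicit Types Phi : 'rV[R]_n -> 'rV[R]_(n.+2).

Lemma partial_orth_self Phi c x i : (forall y, differentiable Phi y) ->
  (forall y, lor (Phi y) (Phi y) = c) -> lor (partial Phi x i) (Phi x) = 0.
Proof.
move=> dP hc.
have d : derivable Phi x (delta_mx ord0 i) by exact: diff_derivable.
have [_ e] := lor_der d d.
have ef : (fun y => lor (Phi y) (Phi y)) = cst c by apply: funext.
move: e; rewrite ef derive_cst (lorC (Phi x)) -/(partial Phi x i) => /eqP.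
by rewrite eq_sym -mulr2n mulrn_eq0 /= => /eqP.
Qed.

Lemma partial_orth_cst Phi w c x i : differentiable Phi x ->
  (forall y, lor (Phi y) w = c) -> lor (partial Phi x i) w = 0.
Proof.
move=> dP hc.
have d : derivable Phi x (delta_mx ord0 i) by exact: diff_derivable.
have [_ e] := lor_der d (derivable_cst w x (delta_mx ord0 i)).
have ef : (fun y => lor (Phi y) (cst w y)) = cst c by apply: funext.
by move: e; rewrite ef !derive_cst lor0r addr0 -/(partial Phi x i).
Qed.

Lemma partial_affine Phi (a : R) w x i : differentiable Phi x ->
  partial (fun y => a *: Phi y + w) x i = a *: partial Phi x i.
Proof.
move=> dP.
have d : derivable Phi x (delta_mx ord0 i) by exact: diff_derivable.
have -> : (fun y => a *: Phi y + w) = (a *: Phi) + cst w by [].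
rewrite /partial deriveD ?deriveZ ?derive_cst ?addr0 //.
all: try exact: derivableZ.
all: try exact: derivable_cst.
Qed.

Lemma differentiable_affine Phi (a : R) w x : differentiable Phi x ->
  differentiable (fun y => a *: Phi y + w) x.
Proof.
move=> dP.
have -> : (fun y => a *: Phi y + w) = (a *: Phi) + cst w by [].
apply: differentiableD; first exact: differentiableZ.
exact: differentiable_cst.
Qed.

Lemma jac_affine Phi (a : R) w x : differentiable Phi x ->
  jac (fun y => a *: Phi y + w) x = a *: jac Phi x.
Proof.
move=> dP; apply/matrixP => i j; rewrite !mxE partial_affine // mxE //.
Qed.

Lemma metric_unit Phi x : lor (Phi x) (Phi x) = -1 ->
  (forall i, lor (partial Phi x i) (Phi x) = 0) -> row_free (jac Phi x) ->
  metric Phi x \in unitmx.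
Proof.
move=> hP hJ rf.
rewrite -row_free_unit; apply: inj_row_free => c hc.
set J := jac Phi x.
have rowJ k : row k J = partial Phi x k by apply/rowP => j; rewrite !mxE.
have wP : lor (c *m J) (Phi x) = 0.
  by rewrite lor_mull big1 // => k _; rewrite rowJ hJ mulr0.
have ww : lor (c *m J) (c *m J) = 0.
  rewrite lor_mull big1 // => k _.
  rewrite lorC lor_mull.
  have := congr1 (fun M : 'rV_n => M ord0 k) hc; rewrite !mxE => hk.
  have -> : \sum_l c ord0 l * lor (row l J) (row k J) = 0.
    by apply: (etrans _ hk); apply: eq_bigr => l _; rewrite !mxE !rowJ.
  by rewrite mulr0.
have [_ h0] := lor_orth_ge0 hP wP.
apply: (row_free_inj rf); by rewrite h0 // mul0mx.
Qed.
End Geo.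

Section Uniq.
Variable R : realType.
Variable n : nat.

Lemma normal_unique (P u : 'rV[R]_(n.+2)) (J : 'M[R]_(n, n.+2)) r :
  lor P P = -1 -> lor u u = 1 -> lor u P = 0 ->
  (forall k, lor (row k J) P = 0) -> (forall k, lor (row k J) u = 0) ->
  row_free J ->
  lor r P = 0 -> lor r u = 0 -> (forall k, lor r (row k J) = 0) -> r = 0.
Proof.
move=> hP hu huP hJP hJu rf hrP hru hrJ.
pose M : 'M[R]_(n.+2) := col_mx (col_mx P u) J.
have Mfree : row_free M.
  apply: inj_row_free => c hc.
  pose c1 := @lsubmx R 1 (1+1) n c.
  pose c3 := @rsubmx R 1 (1+1) n c.
  pose a1 := @lsubmx R 1 1 1 c1.
  pose a2 := @rsubmx R 1 1 1 c1.
  have ec : c = row_mx (row_mx a1 a2) c3 by rewrite /a1 /a2 /c1 /c3 !hsubmxK.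
  have hc' : @mulmx R 1 (1+1+n) n.+2 (row_mx (row_mx a1 a2) c3) (col_mx (col_mx P u) J) = 0.
    by rewrite -ec; exact: hc.
  move: hc'; rewrite !mul_row_col (mx11_scalar a1) (mx11_scalar a2).
  rewrite !mul_scalar_mx => hc2.
  have h3 w : lor (c3 *m J) w = \sum_k c3 ord0 k * lor (row k J) w by rewrite lor_mull.
  have e1 := congr1 (fun w => lor w P) hc2.
  have e2 := congr1 (fun w => lor w u) hc2.
  move: e1 e2; rewrite /= !lorDl !lorZl lor0l h3 big1; last by move=> k _; rewrite hJP mulr0.
  rewrite h3 big1; last by move=> k _; rewrite hJu mulr0.
  rewrite hP hu huP (lorC P u) huP => e1 e2.
  move: e2; rewrite lor0l => e2.
  have a10 : a1 0 0 = 0 by lra.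
  have a20 : a2 0 0 = 0 by lra.
  move: hc2; rewrite a10 a20 !scale0r !add0r => hc3.
  have c30 : c3 = 0 by apply: (row_free_inj rf); rewrite hc3 mul0mx.
  by rewrite ec (mx11_scalar a1) (mx11_scalar a2) a10 a20 c30 !raddf0 !row_mx0.
have Mu : M \in unitmx by rewrite -row_free_unit.
pose X := (lflip r)^T.
have hX0 : @mulmx R (1+1+n) n.+2 1 (col_mx (col_mx P u) J) X = 0.
  rewrite !mul_col_mx.
  have e1 : P *m X = 0.
    by apply/matrixP => i j; rewrite !ord1 lflip_mx lorC hrP mxE.
  have e2 : u *m X = 0.
    by apply/matrixP => i j; rewrite !ord1 lflip_mx lorC hru mxE.
  have e3 : J *m X = 0.
    apply/matrixP => k j; rewrite ord1.
    transitivity ((row k J *m X) ord0 ord0).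
      by rewrite !mxE; apply: eq_bigr => i _; rewrite !mxE.
    by rewrite lflip_mx lorC hrJ mxE.
  by rewrite e1 e2 e3 !col_mx0.
have hX : M *m X = 0 := hX0.
have : X = 0 by rewrite -(mulKmx Mu X) hX mulmx0.
by move/(congr1 trmx); rewrite trmxK trmx0 => /lflip_eq0.
Qed.
End Uniq.

Section Calc.
Variable R : realType.

Lemma derZl (W : normedModType R) (al : R -> R) (A : W) t :
  derivable al t 1 ->
  derivable (fun s => al s *: A) t 1 /\ 'D_1 (fun s => al s *: A) t = 'D_1 al t *: A.
Proof.
move=> /derivable1_diffP d.
have d2 : differentiable (fun s => al s *: A) t by exact: differentiableZl.
split; first exact/derivable1_diffP.
by rewrite deriveE // diffZl // -deriveE.
Qed.

Lemma expR_lin (c t : R) :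
  derivable (fun s => expR (c * s)) t 1 /\ 'D_1 (fun s => expR (c * s)) t = c * expR (c * t).
Proof.
have hl : derivable (fun s : R => c * s) t 1.
  have -> : (fun s : R => c * s) = cst c * id by [].
  by apply: derivableM; [exact: derivable_cst | exact: derivable_id].
have dl : 'D_1 (fun s : R => c * s) t = c.
  have -> : (fun s : R => c * s) = cst c * id by [].
  rewrite deriveM; [|exact: derivable_cst | exact: derivable_id].
  by rewrite derive_cst derive_id /= scaler0 addr0 [_ *: _]mulr1.
have he : derivable (@expR R) (c * t) 1 by case: (is_derive_expR (c * t)).
have -> : (fun s => expR (c * s)) = expR \o (fun s => c * s) by [].
split.
  apply/derivable1_diffP; apply: differentiable_comp; exact/derivable1_diffP.
rewrite -derive1E derive1_comp // !derive1E dl.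
by rewrite (@derive_val _ _ _ _ _ _ _ (is_derive_expR (c * t))) mulrC.
Qed.
End Calc.

Lemma lor_comb (R : realType) m (P w : 'rV[R]_m.+1) a b c d :
  lor P P = -1 -> lor P w = -1 -> lor w w = 0 ->
  lor (a *: P + b *: w) (c *: P + d *: w) = - (a * c) - a * d - b * c.
Proof.
move=> h1 h2 h3; rewrite !(lorDl, lorDr, lorZl, lorZr) h1 h2 (lorC w P) h2 h3; ring.
Qed.

Lemma row_jac (R : realType) n (Phi : 'rV[R]_n -> 'rV[R]_n.+2) x k :
  row k (jac Phi x) = partial Phi x k.
Proof. by apply/rowP => j; rewrite !mxE. Qed.

Lemma lor_der_cst (R : realType) m (V : normedModType R) (P : V -> 'rV[R]_m.+1) w x v :
  derivable P x v ->
  derivable (fun y => lor (P y) w) x v /\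
  'D_v (fun y => lor (P y) w) x = lor ('D_v P x) w.
Proof.
move=> hP; have [h1 h2] := lor_der hP (derivable_cst w x v).
split; first exact: h1.
by rewrite h2 derive_cst lor0r addr0.
Qed.

Lemma derive_cst_sub (R : realType) (V W : normedModType R) (w : W) (f : V -> W) x d :
  derivable f x d -> 'D_d (fun y => w - f y) x = - 'D_d f x.
Proof.
move=> hf; have -> : (fun y => w - f y) = cst w - f by [].
by rewrite deriveB ?derive_cst ?sub0r //; exact: derivable_cst.
Qed.

Unset Implicit Arguments.

Theorem proposition2 (R : realType) (n : nat)
  (F N : 'rV[R]_n -> 'rV[R]_(n.+2)) (kappa : R) :
  immersion_H F ->
  horosphere (range F) ->
  unit_normal F N ->
  (kappa = 1 \/ kappa = -1) ->
  (forall x k, principal_curvature F N x k -> k = kappa) ->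
  let Fh := fun (x : 'rV[R]_n) (t : R) =>
    cosh (n%:R * t) *: F x + (kappa * sinh (n%:R * t)) *: N x in
  (forall x, Fh x 0 = F x) /\
  exists Nh : 'rV[R]_n -> R -> 'rV[R]_(n.+2),
    forall t : R,
      immersion_H (fun x => Fh x t) /\
      unit_normal (fun x => Fh x t) (fun x => Nh x t) /\
      (forall x, derivable (Fh x) t 1 /\
         derive1 (Fh x) t = mean_curvature (fun y => Fh y t) (fun y => Nh y t) x
                         *: Nh x t) /\
      horosphere (range (fun x => Fh x t)).
Proof.
move=> [dF [hF rF]] [v [vv [v0 Hr]]] [dN [NF [NN NdF]]] hk hpc Fh.
have kk : kappa * kappa = 1 by case: hk => ->; rewrite ?mulr1 ?mulrNN ?mulr1.
have hFF y : lor (F y) (F y) = -1 by case: (hF y).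
have hFv y : lor (F y) v = -1.
  have : range F (F y) by exists y.
  by rewrite Hr => -[].
have dFF y i : lor (partial F y i) (F y) = 0 by exact: partial_orth_self.
have dFv y i : lor (partial F y i) v = 0 by exact: (partial_orth_cst _ (dF y) hFv).
pose u y := v - F y.
have uu y : lor (u y) (u y) = 1.
  by rewrite /u !(lorBl, lorBr) vv hFv (lorC v) hFv hFF; ring.
have uF y : lor (u y) (F y) = 0.
  by rewrite /u lorBl (lorC v) hFv hFF; ring.
have udF y i : lor (u y) (partial F y i) = 0.
  by rewrite /u lorBl (lorC v) (lorC (F y)) dFv dFF subrr.
pose a y := lor (N y) (u y).
have NA y : N y = a y *: u y.
  apply/eqP; rewrite -subr_eq0; apply/eqP.
  apply: (normal_unique (P:=F y) (u:=u y) (J:=jac F y)) => //.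
  - by move=> k; rewrite row_jac.
  - by move=> k; rewrite row_jac lorC.
  - by rewrite lorBl lorZl NF uF mulr0 subr0.
  - by rewrite lorBl lorZl uu mulr1 subrr.
  - by move=> k; rewrite row_jac lorBl lorZl NdF udF mulr0 subr0.
have dFd y d : derivable F y d by exact: diff_derivable.
have du y d : derivable u y d.
  have -> : u = cst v - F by [].
  apply: derivableB; [exact: derivable_cst | exact: diff_derivable].
have secF x : second_ff F N x = a x *: metric F x.
  apply/matrixP => i j; rewrite !mxE.
  have dNi : derivable N x (delta_mx ord0 i) by exact: diff_derivable.
  have [_ e1] := lor_der_cst (partial F x j) dNi.
  have [da ea] := lor_der dNi (du x (delta_mx ord0 i)).
  have [db eb] := lor_der_cst (partial F x j) (du x (delta_mx ord0 i)).
  have Du : 'D_(delta_mx ord0 i) u x = - partial F x i.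
    exact: (derive_cst_sub v (dFd x (delta_mx ord0 i))).
  have ef : (fun y => lor (N y) (partial F x j)) =
     (fun y => lor (N y) (u y)) * (fun y => lor (u y) (partial F x j)).
    apply: funext => y.
    change (lor (N y) (partial F x j) = a y * lor (u y) (partial F x j)).
    by rewrite {1}NA lorZl.
  rewrite ef deriveM // eb Du lorNl /= udF scale0r addr0 in e1.
  by rewrite -e1 -/(partial N x i); change (- (a x * - lor (partial F x i) (partial F x j)) = a x * lor (partial F x i) (partial F x j)); rewrite mulrN opprK.
have aK x : (0 < n)%N -> a x = kappa.
  move=> np; apply: hpc; exists (delta_mx 0 (Ordinal np)).
    apply/eqP => /matrixP /(_ 0 (Ordinal np)); rewrite !mxE !eqxx /=.
    by apply/eqP; exact: oner_neq0.
  by rewrite secF -scalemxAr.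
pose E := fun t : R => expR (n%:R * t).
have Epos t : 0 < E t by rewrite /E expR_gt0.
have E0 t : E t != 0 by rewrite gt_eqF.
have FhE x t : Fh x t = (E t)^-1 *: F x + ((E t - (E t)^-1) / 2) *: v.
  rewrite /Fh /= /cosh /sinh expRN -/(E t).
  have := leq0n n; rewrite leq_eqVlt => /orP [/eqP n0|np].
    have e1 : E t = 1 by rewrite /E -n0 mul0r expR0.
    rewrite e1; apply/rowP => j; rewrite !mxE; field.
    by [].
  rewrite (NA x) (aK x np) scalerA mulrAC kk mul1r.
  apply/rowP => j; rewrite !mxE; field.
  all: try by rewrite ?E0.
split.
  move=> x; rewrite FhE /E mulr0 expR0 invr1 subrr mul0r scale0r addr0 scale1r //.
have h2 : (2 : R) != 0 by rewrite pnatr_eq0.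
pose Nh := fun x r => kappa *: (E r *: v - Fh x r).
exists Nh => t.
pose Ei := (E t)^-1.
pose s := (E t - Ei) / 2.
pose Phi := fun x => Ei *: F x + s *: v.
pose Psi := fun x => (- (kappa * Ei)) *: F x + (kappa * (E t - s)) *: v.
have FT : Fh^~ t = Phi by apply: funext => x; rewrite FhE.
have NT : Nh^~ t = Psi.
  apply: funext => x; rewrite /Nh /= FhE /Psi; apply/rowP => j; rewrite !mxE /= /s /Ei; ring.
have EEi : E t * Ei = 1 by rewrite /Ei divff.
have hPhi x : lor (Phi x) (Phi x) = -1.
  rewrite lor_comb // /s.
  have -> : - (Ei * Ei) - Ei * ((E t - Ei) / 2) - (E t - Ei) / 2 * Ei = - (E t * Ei).
    by field; rewrite ?h2.
  by rewrite EEi.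
have hPhiv x : lor (Phi x) (E t *: v) = -1.
  rewrite lorDl !lorZl !lorZr hFv vv !mulr0 addr0 mulrN1 mulrN mulrC EEi //.
have vE : lor (E t *: v) (E t *: v) = 0 by rewrite lorZl lorZr vv !mulr0.
have vE0 : 0 < (E t *: v) ord0 ord0 by rewrite mxE mulr_gt0.
have hypPhi x : hyperbolic (Phi x).
  by split; [exact: hPhi | exact: (future_pos (hPhi x) (hPhiv x) vE vE0)].
have dPhi x : differentiable Phi x by exact: differentiable_affine.
have dPsi x : differentiable Psi x by exact: differentiable_affine.
have pPhi x i : partial Phi x i = Ei *: partial F x i by exact: partial_affine.
have pPsi x i : partial Psi x i = (- (kappa * Ei)) *: partial F x i by exact: partial_affine.
have Ei0 : Ei != 0 by rewrite invr_eq0.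
have rfPhi x : row_free (jac Phi x).
  rewrite /Phi jac_affine // /row_free mxrank_scale_nz //; exact: rF.
have oPhi x i : lor (partial Phi x i) (Phi x) = 0 by exact: (partial_orth_self _ _ dPhi hPhi).
have gu x : metric Phi x \in unitmx by exact: metric_unit.
have sec x : second_ff Phi Psi x = kappa *: metric Phi x.
  apply/matrixP => i j; rewrite !mxE !pPhi !pPsi !lorZl !lorZr; ring.
have mean x : mean_curvature Phi Psi x = kappa * n%:R.
  by rewrite /mean_curvature sec -scalemxAr mulVmx // mxtraceZ mxtrace1.
rewrite FT NT.
split; first by split; [exact: dPhi | split; [exact: hypPhi | exact: rfPhi]].
split.
  split; first exact: dPsi.
  split.
    move=> x; rewrite lor_comb //.
    rewrite /s; field; by rewrite ?E0 ?Ei0 ?h2.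
  split.
    move=> x; rewrite lor_comb //.
    have -> : - (- (kappa * Ei) * - (kappa * Ei)) - - (kappa * Ei) * (kappa * (E t - s)) -
       kappa * (E t - s) * - (kappa * Ei) = (kappa * kappa) * (Ei * (2 * (E t - s) - Ei)) by ring.
    rewrite kk mul1r /s /Ei; field; by rewrite ?E0 ?Ei0 ?h2.
  move=> x i; rewrite pPhi lorZr lorDl !lorZl (lorC (F x)) (lorC v) dFF dFv; ring.
split.
  move=> x.
  have FT2 : Fh x = (fun r => expR ((- n%:R) * r) *: (F x - 2^-1 *: v) + expR (n%:R * r) *: (2^-1 *: v)).
    apply: funext => r; rewrite FhE /E mulNr expRN; apply/rowP => j; rewrite !mxE; field.
    all: try by rewrite gt_eqF ?expR_gt0.
  have [d1 e1] := derZl (F x - 2^-1 *: v) (expR_lin (- n%:R) t).1.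
  have [d2 e2] := derZl (2^-1 *: v) (expR_lin n%:R t).1.
  rewrite FT2.
  split; first exact: (derivableD d1 d2).
  rewrite derive1E.
  change ('D_1 ((fun r => expR ((- n%:R) * r) *: (F x - 2^-1 *: v)) + (fun r => expR (n%:R * r) *: (2^-1 *: v))) t = mean_curvature Phi Psi x *: Nh x t).
  rewrite deriveD // e1 e2 (expR_lin _ t).2 (expR_lin _ t).2 mean /Nh scalerA mulrAC kk mul1r FhE.
  rewrite !mulNr expRN -/(E t); apply/rowP => j; rewrite !mxE /E; field.
  all: try by rewrite gt_eqF ?expR_gt0.
exists (E t *: v); split; first exact: vE.
split; first exact: vE0.
apply/seteqP; split => z.
  move=> [y _ <-]; split; [exact: hypPhi | exact: hPhiv].
move=> [[hz hz0] hzv].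
have hzv' : lor z v = - Ei.
  apply: (mulfI (E0 t)); move: hzv; rewrite lorZr mulrC => ->.
  by rewrite mulrN EEi.
pose y0 := E t *: (z - s *: v).
have y0v : lor y0 v = -1 by rewrite lorZl lorBl lorZl vv mulr0 subr0 hzv' mulrN EEi.
have y0y0 : lor y0 y0 = -1.
  rewrite lorZl lorZr !(lorBl, lorBr) !lorZl !lorZr hz vv hzv' (lorC v z) hzv' /s /Ei.
  by field; rewrite ?E0 ?Ei0 ?h2.
have : range F y0.
  rewrite Hr; split; last exact: y0v.
  by split; [exact: y0y0 | exact: (future_pos y0y0 y0v vv v0)].
case=> y _ hy.
exists y => //.
rewrite /Phi hy /y0; apply/rowP => j; rewrite !mxE /s /Ei; field.
by rewrite ?E0 ?h2.
Qed.
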